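(* Let $\Sigma$ be an alphabet with at least three letters. If $f$ and $g$ are unary congruence preserving functions $\mathcal{T}(\Sigma)\to\mathcal{T}(\Sigma)$ such that $f(a)=g(a)$ for all $a\in\Sigma$, then $f(t)=g(t)$ for all $t\in\mathcal{T}(\Sigma)$.
   Context: Let $\Sigma$ be an alphabet not containing $0,1$. A binary tree over $\Sigma$ is a finite set $t \subseteq \{0,1\}^*\Sigma$ such that for any $ua, vb \in t$ with $ua \neq vb$, $u$ is not a prefix of $v$ and $v$ is not a prefix of $u$; $\mathcal{T}(\Sigma)$ is the set of such trees, $\mathbf 0=\emptyset$, each letter $a$ is identified with $\{a\}$, and $t\star t' = 0.t\cup 1.t'$. A congruence is an equivalence relation on $\mathcal{T}(\Sigma)$ compatible with $\star$. A function $f\colon\mathcal{T}(\Sigma)\to\mathcal{T}(\Sigma)$ is congruence preserving if for every congruence $\sim$, $t\sim t'$ implies $f(t)\sim f(t')$. *)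

(* Defs.v *)
From mathcomp Require Import all_boot.
From mathcomp Require Import finmap.
Set Implicit Arguments. Unset Strict Implicit. Unset Printing Implicit Defensive.
Local Open Scope fset_scope.

(* A word u a with u in {0,1}^* and a in Sigma is encoded as the pair (u, a);
   0 is encoded by false, 1 by true. *)
Definition word (S : finType) := (seq bool * S)%type.

Definition is_tree (S : finType) (t : {fset word S}) : bool :=
  all (fun x => all (fun y => (x != y) ==>
         (~~ prefix x.1 y.1 && ~~ prefix y.1 x.1)) (enum_fset t)) (enum_fset t).

Record tree (S : finType) := Tree { tval :> {fset word S}; tvalP : is_tree tval }.

Lemma is_treeP (S : finType) (t : {fset word S}) :
  reflect (forall x y, x \in t -> y \in t -> x != y ->
             ~~ prefix x.1 y.1 && ~~ prefix y.1 x.1) (is_tree t).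
Proof.
apply: (iffP allP) => [H x y xt yt nxy | H x xt].
  by have /allP /(_ y yt) := H x xt; rewrite nxy.
by apply/allP => y yt; apply/implyP; apply: H.
Qed.

Lemma is_tree0 (S : finType) : is_tree (fset0 : {fset word S}).
Proof. by apply/is_treeP => x y; rewrite in_fset0. Qed.
Definition tree0 (S : finType) : tree S := Tree (is_tree0 S).

Lemma is_tree_leaf (S : finType) (a : S) : is_tree [fset (([::] : seq bool), a)].
Proof. by apply/is_treeP => x y; rewrite !inE => /eqP-> /eqP->; rewrite eqxx. Qed.
Definition leaf (S : finType) (a : S) : tree S := Tree (is_tree_leaf a).

Definition pre (S : finType) (b : bool) (t : {fset word S}) : {fset word S} :=
  [fset ((b :: w.1), w.2) | w in t].

Lemma is_tree_star (S : finType) (t t' : tree S) :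
  is_tree (pre false t `|` pre true t').
Proof.
have key b (u : tree S) x y : x \in pre b u -> y \in pre b u -> x != y ->
    ~~ prefix x.1 y.1 && ~~ prefix y.1 x.1.
  move=> /imfsetP [[u1 a1] xu ->] /imfsetP [[u2 a2] yu ->] /= nxy.
  rewrite /= ?eqxx /=.
  have /is_treeP Hu := tvalP u; apply: (Hu (u1, a1) (u2, a2) xu yu).
  by apply: contraNneq nxy => -[-> ->].
have cross x y : x \in pre false t -> y \in pre true t' ->
    ~~ prefix x.1 y.1 && ~~ prefix y.1 x.1.
  by move=> /imfsetP [[u1 a1] _ ->] /imfsetP [[u2 a2] _ ->].
apply/is_treeP => x y; rewrite !inE => /orP[xt|xt] /orP[yt|yt] nxy.
- exact: key xt yt nxy.
- exact: cross.
- by rewrite andbC; apply: cross.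
- exact: key xt yt nxy.
Qed.
Definition star (S : finType) (t t' : tree S) : tree S := Tree (is_tree_star t t').

Definition congruence (S : finType) (R : tree S -> tree S -> Prop) : Prop :=
  [/\ (forall t, R t t),
      (forall t t', R t t' -> R t' t),
      (forall t1 t2 t3, R t1 t2 -> R t2 t3 -> R t1 t3) &
      (forall t1 t1' t2 t2', R t1 t1' -> R t2 t2' -> R (star t1 t2) (star t1' t2'))].

Definition cong_preserving (S : finType) (f : tree S -> tree S) : Prop :=
  forall R : tree S -> tree S -> Prop, congruence R ->
    forall t t', R t t' -> R (f t) (f t').

(* Main.v *)
Require Import Defs.
From mathcomp Require Import all_boot.
From mathcomp Require Import finmap.
From HB Require Import structures.
From mathcomp Require Import zify.
Set Implicit Arguments. Unset Strict Implicit. Unset Printing Implicit Defensive.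
Local Open Scope fset_scope.

Inductive term (S : Type) := Lf of S | Nl | Nd of term S & term S.
Arguments Nl {S}.

Fixpoint teq (S : eqType) (x y : term S) : bool :=
  match x, y with
  | Lf a, Lf b => a == b
  | Nl, Nl => true
  | Nd x1 x2, Nd y1 y2 => teq x1 y1 && teq x2 y2
  | _, _ => false end.

Lemma teqP (S : eqType) : Equality.axiom (@teq S).
Proof.
elim=> [a||x1 IH1 x2 IH2] [b||y1 y2] /=; try by constructor.
- by apply: (iffP eqP) => [->|[]].
- apply: (iffP andP) => [[/IH1 -> /IH2 ->]|[<- <-]] //.
  by split; [apply/IH1|apply/IH2].
Qed.
HB.instance Definition _ (S : eqType) := hasDecEq.Build (term S) (@teqP S).

Definition isNl S (x : term S) := if x is Nl then true else false.
Definition isLf S (x : term S) := if x is Lf _ then true else false.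
Definition nd S (p q : term S) := if isNl p && isNl q then Nl else Nd p q.
Fixpoint normal S (x : term S) : bool :=
  match x with Nd p q => ~~ (isNl p && isNl q) && normal p && normal q | _ => true end.
Fixpoint tsz S (x : term S) : nat :=
  match x with Nd p q => (tsz p + tsz q).+1 | _ => 1 end.
Fixpoint G S (z : term S) (op : term S -> term S -> term S) (x : term S) : term S :=
  match x with Lf e => Lf e | Nl => z | Nd p q => op (G z op p) (G z op q) end.
Definition inj2 S (op : term S -> term S -> term S) :=
  forall p q p' q', op p q = op p' q' -> p = p' /\ q = q'.

Lemma isNlP S (x : term S) : isNl x -> x = Nl.
Proof. by case: x. Qed.

Lemma tsz_gt0 S (x : term S) : 0 < tsz x.
Proof. by case: x. Qed.

Lemma G_nd S (z : term S) op p q : op z z = z ->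
  G z op (nd p q) = op (G z op p) (G z op q).
Proof.
move=> hz; rewrite /nd; case: ifP => // /andP[/isNlP -> /isNlP ->] /=.
by rewrite hz.
Qed.

Lemma normal_nd S (p q : term S) : normal p -> normal q -> normal (nd p q).
Proof. by rewrite /nd; case: ifP => //= -> -> ->. Qed.

Lemma nd_inj S : inj2 (@nd S).
Proof.
move=> p q p' q'; rewrite /nd.
case: ifP => [/andP[/isNlP -> /isNlP ->]|_]; case: ifP => [/andP[/isNlP -> /isNlP ->]|_] //.
by case=> -> ->.
Qed.

Lemma nd_Lf S (p q : term S) e : nd p q <> Lf e.
Proof. by rewrite /nd; case: ifP. Qed.

Lemma jinj (S : eqType) (z1 z2 : term S) op1 op2 (a b : S) :
  a != b -> op1 z1 z1 = z1 -> op2 z2 z2 = z2 -> inj2 op1 -> inj2 op2 ->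
  (forall p q e, op1 p q = Lf e -> e = a) -> (forall p q e, op2 p q = Lf e -> e = b) ->
  forall x y, normal x -> normal y -> G z1 op1 x = G z1 op1 y -> G z2 op2 x = G z2 op2 y -> x = y.
Proof.
move=> ab h1 h2 i1 i2 r1 r2.
have GL z op (x : term S) : op z z = z -> ~~ isLf x ->
    G z op x = op (G z op (if x is Nd p _ then p else Nl)) (G z op (if x is Nd _ q then q else Nl)).
  by move=> hz; case: x => //= _; rewrite hz.
have lfnl (x : term S) e : ~~ isLf x -> Lf e = G z1 op1 x -> Lf e = G z2 op2 x -> False.
  move=> hx; rewrite (GL _ _ _ h1 hx) (GL _ _ _ h2 hx) => /esym /r1 -> /esym /r2 eab.
  by rewrite eab eqxx in ab.
suff H : forall n x y, tsz x + tsz y <= n -> normal x -> normal y ->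
    G z1 op1 x = G z1 op1 y -> G z2 op2 x = G z2 op2 y -> x = y.
  by move=> x y; apply: (H _ x y (leqnn _)).
elim=> [|n IH] x y.
  by have := tsz_gt0 x; lia.
have step (x' y' : term S) : ~~ isLf x' -> ~~ isLf y' -> tsz x' + tsz y' <= n.+1 ->
    normal x' -> normal y' -> ~~ (isNl x' && isNl y') ->
    G z1 op1 x' = G z1 op1 y' -> G z2 op2 x' = G z2 op2 y' -> x' = y'.
  move=> lx ly hs nx ny nn; rewrite (GL _ _ _ h1 lx) (GL _ _ _ h1 ly) (GL _ _ _ h2 lx) (GL _ _ _ h2 ly).
  move=> /i1 [E1 E1'] /i2 [E2 E2'].
  move: lx ly hs nx ny nn E1 E1' E2 E2'.
  case: x' => [e||p q]; case: y' => [e'||p' q'] //= _ _ hs.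
  - move=> _ /andP[/andP[nn np] nq] _ E1 E1' E2 E2'.
    have ep := IH Nl p' ltac:(simpl in *; lia) is_true_true np E1 E2.
    have eq := IH Nl q' ltac:(simpl in *; lia) is_true_true nq E1' E2'.
    by rewrite -ep -eq in nn.
  - move=> /andP[/andP[nn np] nq] _ _ E1 E1' E2 E2'.
    have ep := IH p Nl ltac:(simpl in *; lia) np is_true_true E1 E2.
    have eq := IH q Nl ltac:(simpl in *; lia) nq is_true_true E1' E2'.
    by rewrite ep eq in nn.
  - move=> /andP[/andP[_ np] nq] /andP[/andP[_ np'] nq'] _ E1 E1' E2 E2'.
    have -> := IH p p' ltac:(simpl in *; lia) np np' E1 E2.
    by have -> := IH q q' ltac:(simpl in *; lia) nq nq' E1' E2'.
case: x => [e||p q]; case: y => [e'||p' q'] hs nx ny E1 E2 //.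
all: try (by apply: step).
all: first [ by simpl in E1; case: E1 => ->
           | by case: (lfnl _ e _ E1 E2)
           | by case: (lfnl _ e' _ (esym E1) (esym E2)) ].
Qed.

Definition opA (S : eqType) (c : S) (p q : term S) :=
  if (p == Lf c) && (q == Lf c) then Lf c else Nd p q.
Definition opB (S : eqType) (T : term S) (c : S) (p q : term S) :=
  if isNl p && isNl q then Nl else if Nd p q == T then Lf c else Nd p q.

Lemma opA_id (S : eqType) (c : S) : opA c (Lf c) (Lf c) = Lf c.
Proof. by rewrite /opA eqxx. Qed.

Lemma opA_inj (S : eqType) (c : S) : inj2 (opA c).
Proof.
move=> p q p' q'; rewrite /opA.
case: ifP => [/andP[/eqP-> /eqP->]|_]; case: ifP => [/andP[/eqP-> /eqP->]|_] //.
by case=> -> ->.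
Qed.

Lemma opA_rng (S : eqType) (c : S) p q e : opA c p q = Lf e -> e = c.
Proof. by rewrite /opA; case: ifP => // _ [->]. Qed.

Lemma opB_id (S : eqType) (T : term S) c : opB T c Nl Nl = Nl.
Proof. by []. Qed.

Lemma opB_inj (S : eqType) (T : term S) c : inj2 (opB T c).
Proof.
move=> p q p' q'; rewrite /opB.
case E1: (isNl p && isNl q); case E2: (isNl p' && isNl q');
  case E3: (Nd p q == T); case E4: (Nd p' q' == T) => //= H.
all: first [ by move/andP: E1 => [/isNlP-> /isNlP->]; move/andP: E2 => [/isNlP-> /isNlP->]
           | by move/eqP: E3 => E3; move/eqP: E4; rewrite -E3 => -[-> ->]
           | by case: H => -> -> ].
Qed.

Lemma opB_rng (S : eqType) (T : term S) c p q e : opB T c p q = Lf e -> e = c.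
Proof. by rewrite /opB; case: ifP => // _; case: ifP => // _ [->]. Qed.

Lemma opB_fix (S : eqType) (T : term S) c x : normal x -> tsz x < tsz T ->
  G Nl (opB T c) x = x.
Proof.
elim: x => [e||p IHp q IHq] //= /andP[/andP[nn np] nq] hs.
rewrite IHp ?IHq //; try lia.
rewrite /opB (negbTE nn); case: ifP => // /eqP E.
by rewrite -E /= ltnn in hs.
Qed.

Lemma opB_hit (S : eqType) (P Q : term S) c : normal (Nd P Q) ->
  G Nl (opB (Nd P Q) c) (Nd P Q) = Lf c.
Proof.
move=> /= /andP[/andP[nn np] nq].
rewrite !opB_fix //=; try lia.
by rewrite /opB (negbTE nn) eqxx.
Qed.

Definition sub (S : finType) (b : bool) (u : {fset word S}) : {fset word S} :=
  [fset (behead w.1, w.2) | w in u & head (~~ b) w.1 == b].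

Lemma mem_sub (S : finType) b (u : {fset word S}) x e :
  ((x, e) \in sub b u) = ((b :: x, e) \in u).
Proof.
apply/imfsetP/idP => [[[[|c y] e'] /=]|h].
- by rewrite !inE /= => /andP[_]; case: b.
- rewrite !inE /= => /andP[wu /eqP hb] [-> ->]; by rewrite -hb.
- by exists (b :: x, e) => //=; rewrite !inE h /= eqxx.
Qed.

Lemma mem_pre (S : finType) b (u : {fset word S}) x e :
  ((x, e) \in pre b u) = if x is c :: y then (c == b) && ((y, e) \in u) else false.
Proof.
apply/imfsetP/idP => [[[y e'] /= hy [-> ->]]|].
- by rewrite eqxx.
- case: x => // c y /andP[/eqP -> h]; by exists (y, e).
Qed.

Lemma decomp (S : finType) (u : {fset word S}) : (forall e, (([::], e) \in u) = false) ->
  u = pre false (sub false u) `|` pre true (sub true u).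
Proof.
move=> h; apply/fsetP => -[[|c y] e]; rewrite in_fsetU !mem_pre ?h //.
by case: c; rewrite !mem_sub /= ?orbF.
Qed.

Lemma sub_tree (S : finType) b (u : {fset word S}) : is_tree u -> is_tree (sub b u).
Proof.
move=> /is_treeP H; apply/is_treeP => -[x e] [y e']; rewrite !mem_sub => hx hy nxy.
have := H _ _ hx hy; rewrite /= eqxx /=; apply.
by apply: contraNneq nxy => -[-> ->].
Qed.

Lemma single (S : finType) (u : {fset word S}) e : is_tree u -> ([::], e) \in u ->
  u = [fset ([::], e)].
Proof.
move=> /is_treeP H he; apply/fsetP => w; rewrite inE; apply/idP/eqP => [wu|->//].
apply/eqP; apply: contraT => nw.
by have := H _ _ he wu; rewrite eq_sym nw /= prefix0s => /(_ isT).
Qed.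

Definition bounded (S : finType) n (u : {fset word S}) := forall w, w \in u -> size w.1 < n.
Definition emp (S : finType) (u : {fset word S}) := [pick e : S | ([::], e) \in u].
Fixpoint enc (S : finType) n (u : {fset word S}) : term S :=
  if n is n'.+1 then
    (if emp u is Some e then Lf e else nd (enc n' (sub false u)) (enc n' (sub true u)))
  else Nl.

Lemma bounded0 (S : finType) (u : {fset word S}) : bounded 0 u -> u = fset0.
Proof. by move=> H; apply/fsetP => w; rewrite inE; apply/negbTE/negP => /H. Qed.

Lemma bounded_sub (S : finType) n b (u : {fset word S}) : bounded n.+1 u -> bounded n (sub b u).
Proof. by move=> H [x e]; rewrite mem_sub => /H. Qed.

Lemma bounded_mono (S : finType) n m (u : {fset word S}) : n <= m -> bounded n u -> bounded m u.
Proof. by move=> nm H w /H; move/leq_trans; apply. Qed.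

Lemma sub0 (S : finType) b : sub b (fset0 : {fset word S}) = fset0.
Proof. by apply/fsetP => -[x e]; rewrite mem_sub !inE. Qed.

Lemma emp0 (S : finType) : emp (fset0 : {fset word S}) = None.
Proof. by rewrite /emp; case: pickP => // e; rewrite inE. Qed.

Lemma enc0 (S : finType) m : enc m (fset0 : {fset word S}) = Nl.
Proof. by elim: m => //= m IH; rewrite emp0 !sub0 IH. Qed.

Lemma enc_stable (S : finType) n (u : {fset word S}) m : bounded n u -> n <= m ->
  enc m u = enc n u.
Proof.
elim: n u m => [|n IH] u m.
  by move=> /bounded0 ->; rewrite enc0.
case: m => // m hb hm /=.
by rewrite !IH //; apply: bounded_sub.
Qed.

Lemma enc_normal (S : finType) n (u : {fset word S}) : normal (enc n u).
Proof.
elim: n u => //= n IH u; case: (emp u) => //.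
exact: normal_nd (IH _) (IH _).
Qed.

Definition bnd (S : finType) (u : {fset word S}) :=
  foldr (fun w n => maxn (size w.1).+1 n) 0 (enum_fset u).

Lemma bnd_ok (S : finType) (u : {fset word S}) : bounded (bnd u) u.
Proof.
rewrite /bounded /bnd => w; have -> : (w \in u) = (w \in enum_fset u) by [].
elim: (enum_fset u) => //= x s IH; rewrite inE => /orP[/eqP->|/IH h].
- by rewrite leq_max ltnSn.
- by rewrite leq_max h orbT.
Qed.

Definition io (S : finType) (y : tree S) := enc (bnd y) y.

Lemma io_enc (S : finType) n (y : tree S) : bounded n y -> io y = enc n y.
Proof.
move=> hb; rewrite /io -(@enc_stable _ (bnd y) _ (maxn n (bnd y))) ?leq_maxr ?bnd_ok //.
by rewrite (@enc_stable _ n) ?leq_maxl.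
exact: bnd_ok.
Qed.

Lemma io_leaf (S : finType) (e : S) : io (leaf e) = Lf e.
Proof.
rewrite (@io_enc _ 1) /=.
  rewrite /emp; case: pickP => [e'|] /=.
    by rewrite inE => /eqP [->].
  by move=> /(_ e) /=; rewrite inE eqxx.
by move=> w; rewrite /= inE => /eqP ->.
Qed.

Lemma io_tree0 (S : finType) : io (tree0 S) = Nl.
Proof. by rewrite (@io_enc _ 0) // => w; rewrite /= inE. Qed.

Lemma io_star (S : finType) (x y : tree S) : io (star x y) = nd (io x) (io y).
Proof.
set n := maxn (bnd x) (bnd y).
have bx : bounded n x := bounded_mono (leq_maxl _ _) (@bnd_ok _ x).
have by_ : bounded n y := bounded_mono (leq_maxr _ _) (@bnd_ok _ y).
rewrite (io_enc bx) (io_enc by_) (@io_enc _ n.+1).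
  rewrite /= /emp; case: pickP => [e|_].
    by rewrite /= in_fsetU !mem_pre.
  have -> : sub false (star x y) = x.
    by apply/fsetP => -[z e]; rewrite mem_sub /= in_fsetU !mem_pre /= orbF.
  have -> : sub true (star x y) = y.
    by apply/fsetP => -[z e]; rewrite mem_sub /= in_fsetU !mem_pre /=.
  by [].
move=> -[[|c z] e]; rewrite /= in_fsetU !mem_pre // => /orP[/andP[_ /bx]|/andP[_ /by_]] //.
Qed.

Lemma enc_inj (S : finType) n (u v : {fset word S}) : is_tree u -> is_tree v ->
  bounded n u -> bounded n v -> enc n u = enc n v -> u = v.
Proof.
elim: n u v => [|n IH] u v tu tv bu bv.
  by rewrite (bounded0 bu) (bounded0 bv).
rewrite /= /emp; case: pickP => [e he|hu]; case: pickP => [e' he'|hv].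
- by case=> E; rewrite (single tu he) (single tv he') E.
- by move=> E; case: (nd_Lf (esym E)).
- by move=> E; case: (nd_Lf E).
- move=> /nd_inj [E0 E1].
  rewrite (decomp hu) (decomp hv).
  rewrite (IH _ _ (sub_tree false tu) (sub_tree false tv) (@bounded_sub _ n false u bu) (@bounded_sub _ n false v bv) E0).
  by rewrite (IH _ _ (sub_tree true tu) (sub_tree true tv) (@bounded_sub _ n true u bu) (@bounded_sub _ n true v bv) E1).
Qed.

Lemma tree_inj (S : finType) (x y : tree S) : Defs.tval x = Defs.tval y -> x = y.
Proof.
case: x => x hx; case: y => y hy /= E; subst.
by congr Tree; apply: bool_irrelevance.
Qed.

Lemma io_inj (S : finType) (x y : tree S) : io x = io y -> x = y.
Proof.
set n := maxn (bnd x) (bnd y).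
have bx : bounded n x := bounded_mono (leq_maxl _ _) (@bnd_ok _ x).
have by_ : bounded n y := bounded_mono (leq_maxr _ _) (@bnd_ok _ y).
rewrite (io_enc bx) (io_enc by_) => E; apply: tree_inj.
exact: (enc_inj (tvalP x) (tvalP y) bx by_ E).
Qed.

Lemma io_normal (S : finType) (x : tree S) : normal (io x).
Proof. exact: enc_normal. Qed.

Lemma kerC (S : finType) (z : term S) op : op z z = z ->
  congruence (fun x y : tree S => G z op (io x) = G z op (io y)).
Proof.
move=> hz; split => //.
- by move=> t1 t2 t3 -> ->.
- by move=> t1 t1' t2 t2' E1 E2; rewrite !io_star !G_nd // E1 E2.
Qed.

Theorem mainTheorem4 (S : finType) (hS : 3 <= #|S|) (f g : tree S -> tree S) :
  cong_preserving f -> cong_preserving g ->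
  (forall a : S, f (leaf a) = g (leaf a)) ->
  forall t : tree S, f t = g t.
Proof.
move=> cf cg hfg t.
have [c [d cd]] : exists c d : S, c != d.
  move: hS; rewrite cardE; have := enum_uniq S.
  case: (enum S) => [|c [|d s]] //= /andP[]; rewrite inE negb_or => /andP[cd _] _ _.
  by exists c, d.
have key z1 op1 z2 op2 a b : a != b -> op1 z1 z1 = z1 -> op2 z2 z2 = z2 ->
    inj2 op1 -> inj2 op2 ->
    (forall p q e, op1 p q = Lf e -> e = a) -> (forall p q e, op2 p q = Lf e -> e = b) ->
    G z1 op1 (io t) = Lf a -> G z2 op2 (io t) = Lf b -> f t = g t.
  move=> ab h1 h2 i1 i2 r1 r2 t1 t2; apply: io_inj.
  apply: (jinj ab h1 h2 i1 i2 r1 r2); rewrite ?io_normal //.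
  - have E : G z1 op1 (io t) = G z1 op1 (io (leaf a)) by rewrite t1 io_leaf.
    rewrite (cf _ (kerC h1) _ _ E) hfg.
    exact: (cg _ (kerC h1) _ _ (esym E)).
  - have E : G z2 op2 (io t) = G z2 op2 (io (leaf b)) by rewrite t2 io_leaf.
    rewrite (cf _ (kerC h2) _ _ E) hfg.
    exact: (cg _ (kerC h2) _ _ (esym E)).
case Et: (io t) => [e||P Q].
- by move: Et; rewrite -(io_leaf e) => /io_inj ->.
- apply: (key _ _ _ _ _ _ cd (@opA_id _ c) (@opA_id _ d) (@opA_inj _ c) (@opA_inj _ d)).
  + exact: opA_rng.
  + exact: opA_rng.
  + by rewrite Et.
  + by rewrite Et.
- have nT : normal (Nd P Q) by rewrite -Et io_normal.
  apply: (key _ _ _ _ _ _ cd (@opB_id _ (Nd P Q) c) (@opB_id _ (Nd P Q) d) (@opB_inj _ (Nd P Q) c) (@opB_inj _ (Nd P Q) d)).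
  + exact: opB_rng.
  + exact: opB_rng.
  + by rewrite Et opB_hit.
  + by rewrite Et opB_hit.
Qed.
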